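(* Let $K_n$ be the complete graph on nodes $v_1,\dots,v_n$ with threshold function $t$ satisfying $1\le t(v)\le n-1$, let $1\le m\le n$, let $K_m$ be the subgraph induced by $V_m=\{v_1,\dots,v_m\}$, and suppose $t(v_1)\le t(v_2)\le\cdots\le t(v_m)$. Let $\lambda\ge1$ and $1\le \ell\le\lambda$. If there exists an $\ell$-optimal incentive function for $K_m$ under which the set of nodes influenced by the end of round $\ell-1$ has exactly $k<m$ elements, then there exists an $\ell$-optimal incentive function for $K_m$ under which $\{v_1,\dots,v_k\}$ are influenced by the end of round $\ell-1$.
   Context: Influence model on a graph $G=(V,E)$ with thresholds $t:V\to\{1,2,\dots\}$: an incentive function is $p:V\to\{0,1,2,\dots\}$ with $0\le p(v)\le t(v)$, of cost $\sum_v p(v)$. The influence process in $G$: $\mathsf{Influenced}[p,0]=\{v: p(v)=t(v)\}$ and, for $r>0$, $\mathsf{Influenced}[p,r]=\mathsf{Influenced}[p,r-1]\cup\{v: |N(v)\cap \mathsf{Influenced}[p,r-1]|\ge t(v)-p(v)\}$, where $N(v)$ is the neighbourhood of $v$ in $G$. A node is influenced by the end of round $r$ if it lies in $\mathsf{Influenced}[p,r]$. An incentive function $p:V_m\to\{0,1,2,\dots\}$ is $\ell$-optimal for $K_m$ if it has minimum cost among all incentive functions on $V_m$ for which the influence process in $K_m$ (with thresholds $t$ restricted to $V_m$) satisfies $\mathsf{Influenced}[p,\ell]=V_m$. *)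

(* Defs.v *)
From mathcomp Require Import all_boot.
Unset Printing Implicit Defensive.

Fixpoint influenced (T : finType) (adj : rel T) (t p : T -> nat) (r : nat)
  : {set T} :=
  match r with
  | 0 => [set v | p v == t v]
  | r'.+1 =>
      let S := @influenced T adj t p r' in
      S :|: [set v | t v - p v <= #|[set u in S | adj v u]| ]
  end.

Definition incentive (T : finType) (t p : T -> nat) : Prop :=
  forall v, p v <= t v.

Definition cost (T : finType) (p : T -> nat) : nat := \sum_(v : T) p v.

(* The complete graph K_m on V_m = {v_1,...,v_m}, represented as 'I_m
   (vertex v_{i+1} is the ordinal i), with thresholds t restricted to V_m;
   here t : nat -> nat gives t(v_{i+1}) = t i. *)
Definition Km_adj (m : nat) : rel 'I_m := fun u v => u != v.
Definition Km_t (m : nat) (t : nat -> nat) : 'I_m -> nat := fun i => t i.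

Definition influencedKm (m : nat) (t : nat -> nat) (p : 'I_m -> nat) (r : nat)
  : {set 'I_m} := @influenced _ (@Km_adj m) (Km_t m t) p r.

Definition l_optimal_Km (m : nat) (t : nat -> nat) (l : nat) (p : 'I_m -> nat)
  : Prop :=
  [/\ @incentive _ (Km_t m t) p,
      influencedKm m t p l = [set: 'I_m] &
      forall q : 'I_m -> nat, @incentive _ (Km_t m t) q ->
        influencedKm m t q l = [set: 'I_m] -> @cost _ p <= @cost _ q].

(* Main.v *)
Require Import Defs.
From mathcomp Require Import all_boot.
From mathcomp Require Import fingroup perm zify.

Section Aux.
Variables (m : nat) (t : nat -> nat).

Lemma eq_sub0 (a b : nat) : a <= b -> (a == b) = (b - a == 0).
Proof. move=> H; apply/eqP/eqP; lia. Qed.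

Lemma corr (p q : 'I_m -> nat) (tau : {perm 'I_m}) :
  @incentive _ (Km_t m t) p -> @incentive _ (Km_t m t) q ->
  (forall v, Km_t m t v - q v = Km_t m t (tau v) - p (tau v)) ->
  forall r v, (v \in influencedKm m t q r) = (tau v \in influencedKm m t p r).
Proof.
move=> Ip Iq D; elim=> [|r IH] v.
  by rewrite /influencedKm /= !inE eq_sub0 // D -eq_sub0.
rewrite /influencedKm /= !in_setU !inE -/(influencedKm m t q r) -/(influencedKm m t p r) IH D.
congr (_ || (_ <= _)).
have -> : [set u in influencedKm m t q r | @Km_adj m v u] =
   tau @^-1: [set u in influencedKm m t p r | @Km_adj m (tau v) u].
  apply/setP=> u; rewrite !inE IH /Km_adj (inj_eq perm_inj) //.
by rewrite card_preimset //; apply: perm_inj.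
Qed.

Lemma sep (p : 'I_m -> nat) : @incentive _ (Km_t m t) p ->
  forall r v w, v \in influencedKm m t p r -> w \notin influencedKm m t p r ->
  Km_t m t v - p v < Km_t m t w - p w.
Proof.
move=> Ip; elim=> [|r IH] v w.
  rewrite /influencedKm /= !inE => /eqP a b.
  have := Ip w; move: b; rewrite /Km_t in a * => b c.
  move/eqP: b; lia.
rewrite /influencedKm /= !in_setU !inE -/(influencedKm m t p r) negb_or.
set S := influencedKm m t p r.
move=> Hv /andP[Hw Hw2].
have E : [set u in S | @Km_adj m w u] = S.
  apply/setP=> u; rewrite !inE /Km_adj; case uS: (u \in S); rewrite ?andbF //=.
  by apply/eqP=> wu; rewrite wu uS in Hw.
rewrite E -ltnNge in Hw2.
case/orP: Hv => Hv; first exact: IH.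
apply: leq_ltn_trans Hv _; apply: leq_ltn_trans Hw2.
by apply: subset_leq_card; apply/subsetP=> u; rewrite inE => /andP[].
Qed.

End Aux.

Theorem lemma6 (n m : nat) (t : nat -> nat) (lambda l k : nat) :
  (forall i, i < n -> 1 <= t i <= n.-1) ->
  1 <= m <= n ->
  (forall i j, i <= j -> j < m -> t i <= t j) ->
  1 <= lambda ->
  1 <= l <= lambda ->
  k < m ->
  (exists p : 'I_m -> nat,
      l_optimal_Km m t l p /\ #|influencedKm m t p l.-1| = k) ->
  exists p : 'I_m -> nat,
    l_optimal_Km m t l p /\
    [set i : 'I_m | i < k] \subset influencedKm m t p l.-1.
Proof.
move=> _ _ Ht _ _ km [p0 [Op0 Ck0]].
set Ik := [set i : 'I_m | i < k].
have cIk : #|Ik| <= k.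
  rewrite cardE -(size_map val); rewrite -[k in _ <= k](size_iota 0).
  apply: uniq_leq_size; first by rewrite (map_inj_uniq val_inj) enum_uniq.
  by move=> x /mapP[y]; rewrite mem_enum inE => yk ->; rewrite mem_iota.
suff main : forall N p, l_optimal_Km m t l p -> #|influencedKm m t p l.-1| = k ->
  k - #|influencedKm m t p l.-1 :&: Ik| < N ->
  exists p, l_optimal_Km m t l p /\ Ik \subset influencedKm m t p l.-1.
  exact: (main (k - #|influencedKm m t p0 l.-1 :&: Ik|).+1 p0).
elim=> [//|N IH] p Op Cp HN.
set S := influencedKm m t p l.-1 in Cp HN *.
case: (boolP (Ik \subset S)) => [sub|nsub]; first by exists p.
have [i iIk iS] : exists2 i, i \in Ik & i \notin S by apply/subsetPn.
have [j jS jIk] : exists2 j, j \in S & j \notin Ik.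
  apply/subsetPn/negP => sub.
  have sub2 : S \subset Ik :\ i.
    apply/subsetP=> x xS; rewrite in_setD1 (subsetP sub x xS) andbT.
    by apply/eqP=> xi; rewrite -xi xS in iS.
  have H1 := subset_leq_card sub2; have H2 := cardsD1 i Ik; rewrite iIk in H2.
  have : #|S| < k.
    rewrite /= add1n in H2. apply: leq_trans cIk; rewrite H2 ltnS //.
  by rewrite Cp ltnn.
have ik : i < k by rewrite inE in iIk.
have jk : k <= j by rewrite inE -leqNgt in jIk.
case: Op => Ip Fp Mp.
have sepij := @sep m t p Ip _ _ _ jS iS.
rewrite /Km_t in sepij.
have tij : t i <= t j by apply: Ht; [lia | exact: ltn_ord].
have Ipi := Ip i; rewrite /Km_t in Ipi.
pose tau := tperm i j.
pose q := fun v : 'I_m => t v - (t (tau v) - p (tau v)).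
have bnd : forall v : 'I_m, t (tau v) - p (tau v) <= t v.
  move=> v; rewrite /tau; case: tpermP => [->|->|_ _]; lia.
have Iq : @incentive _ (Km_t m t) q by move=> v; rewrite /q /Km_t leq_subr.
have D : forall v, Km_t m t v - q v = Km_t m t (tau v) - p (tau v).
  by move=> v; rewrite /Km_t /q subKn.
have Cor := @corr m t p q tau Ip Iq D.
have Sq : influencedKm m t q l.-1 = tau @^-1: S.
  by apply/setP=> v; rewrite Cor inE.
have Oq : l_optimal_Km m t l q.
  split=> //.
    by apply/setP=> v; rewrite Cor Fp !inE.
  move=> q' Iq' Fq'; apply: leq_trans (Mp q' Iq' Fq').
  have Hq : @cost _ q + \sum_v (Km_t m t v - q v) = \sum_v Km_t m t v.
    by rewrite /cost -big_split; apply: eq_bigr => v _; rewrite /Km_t /=; have := Iq v; have := Ip v; rewrite /Km_t; lia.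
  have Hp : @cost _ p + \sum_v (Km_t m t v - p v) = \sum_v Km_t m t v.
    by rewrite /cost -big_split; apply: eq_bigr => v _; rewrite /Km_t /=; have := Iq v; have := Ip v; rewrite /Km_t; lia.
  have E : \sum_v (Km_t m t v - q v) = \sum_v (Km_t m t v - p v).
    rewrite (eq_bigr _ (fun v _ => D v)).
    symmetry; exact: (reindex_inj (@perm_inj _ tau)).
  lia.
apply: (IH q Oq); first by rewrite Sq card_preimset //; apply: perm_inj.
have := subset_leq_card (subsetIr (influencedKm m t q l.-1) Ik).
suff H3 : #|S :&: Ik| < #|influencedKm m t q l.-1 :&: Ik|.
  move=> H4; move: HN H3 H4 cIk; set x := #|S :&: _|; set y := #|_ :&: Ik|; set z := #|Ik|; lia.
apply: proper_card; apply/properP; split.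
  apply/subsetP=> v; rewrite !inE Sq !inE => /andP[vS vk].
  rewrite vk andbT /tau tpermD //.
    by apply/eqP=> e; rewrite e vS in iS.
  by apply/eqP=> e; rewrite e inE vk in jIk.
exists i; first by rewrite Sq !inE /tau tpermL jS.
by rewrite inE (negbTE iS).
Qed.
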